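(* Let $\mathcal{G}_R$ be the class of all finite reflexive graphs and let $K_n$ be the complete reflexive graph on $n$ vertices. Then the class $\mathrm{Av}(K_n)=\{H\in\mathcal{G}_R: K_n\not\preceq H\}$, with respect to the strong homomorphic image ordering $\preceq$, is well quasi-ordered.
   Context: A reflexive graph is a set with a symmetric edge relation having a loop at every vertex. A homomorphism maps edges to edges; it is strong if additionally every edge of the target between vertices of the image is the image of an edge. Strong homomorphic image ordering: $A\preceq B$ iff there is a surjective strong homomorphism $B\to A$. Well quasi-ordered means no infinite strictly decreasing sequence and no infinite antichain; graphs considered up to isomorphism. *)

(* Defs.v *)
From mathcomp Require Import all_boot.
Set Implicit Arguments. Unset Strict Implicit. Unset Printing Implicit Defensive.

(* A finite reflexive graph, with vertex set 'I_n (every finite graph is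
   isomorphic to one of these; all notions below are isomorphism-invariant). *)
Record rgraph := RGraph {
  rg_n : nat;
  rg_e : rel 'I_rg_n;
  rg_refl : reflexive rg_e;
  rg_sym : symmetric rg_e }.

Definition is_hom (B A : rgraph) (f : 'I_(rg_n B) -> 'I_(rg_n A)) : Prop :=
  forall x y, @rg_e B x y -> @rg_e A (f x) (f y).

Definition is_strong_hom (B A : rgraph) (f : 'I_(rg_n B) -> 'I_(rg_n A)) : Prop :=
  @is_hom B A f /\
  forall x y, @rg_e A (f x) (f y) ->
    exists x' y', [/\ f x' = f x, f y' = f y & @rg_e B x' y'].

Definition shi_le (A B : rgraph) : Prop :=
  exists f : 'I_(rg_n B) -> 'I_(rg_n A),
    @is_strong_hom B A f /\ (forall a, exists x, f x = a).

Definition shi_lt (A B : rgraph) : Prop := shi_le A B /\ ~ shi_le B A.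

Definition K (n : nat) : rgraph :=
  @RGraph n (fun _ _ => true) (fun _ => erefl) (fun _ _ => erefl).

Definition wqo_on (C : rgraph -> Prop) : Prop :=
  (~ exists G : nat -> rgraph,
       (forall i, C (G i)) /\ (forall i, shi_lt (G i.+1) (G i))) /\
  (~ exists G : nat -> rgraph,
       (forall i, C (G i)) /\
       (forall i j, i <> j -> ~ shi_le (G i) (G j))).

Definition Av (H0 : rgraph) : rgraph -> Prop := fun H => ~ shi_le H0 H.

(* Main.v *)
Require Import Defs.
From Stdlib Require Import Classical ClassicalEpsilon.
From mathcomp Require Import all_boot zify.
Set Implicit Arguments. Unset Strict Implicit. Unset Printing Implicit Defensive.

Lemma min_after (a : nat -> nat) p :
  exists q, p < q /\ forall j, p < j -> a q <= a j.
Proof.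
suff H : forall v q, p < q -> a q <= v -> exists q, p < q /\ forall j, p < j -> a q <= a j.
  by apply: (H (a p.+1) p.+1).
elim=> [|v IH] q pq aq.
  by exists q; split=> // j _; move: aq; rewrite leqn0 => /eqP ->.
case: (classic (forall j, p < j -> a q <= a j)) => [H|]; first by exists q; split.
move=> /not_all_ex_not [j] Hj; have [pj /negP] := imply_to_and _ _ Hj.
rewrite -ltnNge => ajq.
by apply: (IH j pj); rewrite -ltnS (leq_trans ajq).
Qed.

Lemma sub1 (a : nat -> nat) : exists phi : nat -> nat,
  (forall i, phi i < phi i.+1) /\ (forall i, a (phi i) <= a (phi i.+1)).
Proof.
have H p : {q | p < q /\ forall j, p < j -> a q <= a j}.
  exact: constructive_indefinite_description (min_after a p).
pose nxt p := proj1_sig (H p).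
have nxt1 p : p < nxt p by case: (proj2_sig (H p)).
have nxt2 p j : p < j -> a (nxt p) <= a j.
  by move=> pj; case: (proj2_sig (H p)) => _ /(_ j pj).
exists (fun i => iter i.+1 nxt 0); split=> i; rewrite [iter i.+2 _ _]iterS.
  exact: nxt1.
rewrite iterS; apply: nxt2; rewrite -iterS; exact: (ltn_trans (nxt1 _) (nxt1 _)).
Qed.

Lemma dickson_seq (X : Type) (I : eqType) (g : X -> I -> nat) (l : seq I)
  (s : nat -> X) : exists phi : nat -> nat,
  (forall i, phi i < phi i.+1) /\
  (forall t, t \in l -> forall i, g (s (phi i)) t <= g (s (phi i.+1)) t).
Proof.
elim: l => [|t l [phi [Hphi Hl]]].
  by exists id; split=> // i.
have [psi [Hpsi Ht]] := sub1 (fun k => g (s (phi k)) t).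
have phimon : {homo phi : i j / i < j >-> i < j}.
  by apply: homo_ltn => //; exact: ltn_trans.
exists (fun i => phi (psi i)); split=> [i|u]; first exact: phimon.
rewrite in_cons => /orP [/eqP -> //|ul] i.
have := homo_leq (f := fun k => g (s (phi k)) u) (r := leq) (@leqnn) (@leq_trans) (Hl u ul).
by apply; apply: ltnW.
Qed.

Lemma dickson (X : Type) (I : finType) (g : X -> I -> nat) (s : nat -> X) :
  exists i j, i < j /\ forall t, g (s i) t <= g (s j) t.
Proof.
have [phi [H1 H2]] := dickson_seq g (enum I) s.
by exists (phi 0), (phi 1); split=> // t; apply: H2; rewrite mem_enum.
Qed.

Definition indep N (e : rel 'I_N) (P : pred 'I_N) :=
  forall x y, ~~ P x -> ~~ P y -> x != y -> ~~ e x y.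

Lemma cover_or_matching (N : nat) (e : rel 'I_N) (x0 : 'I_N) k :
 (exists S : {set 'I_N}, #|S| <= k.*2 /\ indep e (mem S))
 \/ exists l : seq 'I_N, [/\ uniq l, size l = k.*2 &
      forall i, i < k -> e (nth x0 l i.*2) (nth x0 l i.*2.+1)].
Proof.
elim: k => [|k [[S [HS HI]]|[l [ul sl el]]]].
- by right; exists [::].
- left; exists S; split=> //; rewrite (leq_trans HS) // leq_double; lia.
- case: (boolP [exists x, exists y, [&& x \notin l, y \notin l, x != y & e x y]]).
  + case/existsP => x /existsP [y /and4P [xl yl xy exy]].
    right; exists (x :: y :: l); split.
    * by rewrite /= in_cons negb_or xy xl yl ul.
    * by rewrite /= sl doubleS.
    * case=> [|i] //; rewrite ltnS => ik; rewrite doubleS /=; exact: el.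
  + move=> Hn; left; exists [set x in l]; split.
    * rewrite cardsE (card_uniqP ul) sl leq_double; lia.
    * move=> x y; rewrite !inE => xS yS xy; apply/negP => exy.
      move/negP: Hn; apply; apply/existsP; exists x; apply/existsP; exists y.
      by rewrite xS yS xy exy.
Qed.

Lemma matching_K n' (H : Defs.rgraph) (x0 : 'I_(rg_n H)) (l : seq 'I_(rg_n H)) :
  uniq l -> size l = (n'.+1 * n'.+1).*2 ->
  (forall i, i < n'.+1 * n'.+1 -> rg_e (nth x0 l i.*2) (nth x0 l i.*2.+1)) ->
  shi_le (K n'.+1) H.
Proof.
set n := n'.+1 => ul sl el.
pose f (x : 'I_(rg_n H)) : 'I_n :=
  let i := index x l in
  if i < size l then inord (if odd i then (i./2) %% n else (i./2) %/ n) else ord0.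
have fE1 j : j < n * n -> f (nth x0 l j.*2) = inord (j %/ n).
  move=> jn; rewrite /f index_uniq //; last by rewrite sl ltn_double.
  by rewrite sl ltn_double jn odd_double doubleK.
have fE2 j : j < n * n -> f (nth x0 l j.*2.+1) = inord (j %% n).
  move=> jn; rewrite /f index_uniq //; last by rewrite sl -doubleS leq_double.
  rewrite sl -doubleS leq_double jn /= odd_double /=.
  by rewrite uphalf_double.
have jlt (a b : 'I_n) : a * n + b < n * n.
  have := ltn_ord a; have := ltn_ord b; nia.
have dE (a b : 'I_n) : (a * n + b) %/ n = a.
  by rewrite divnMDl // divn_small // addn0.
have mE (a b : 'I_n) : (a * n + b) %% n = b.
  by rewrite modnMDl modn_small.
exists f; split; last first.
  move=> a; exists (nth x0 l (a * n + a).*2); by rewrite fE1 // dE inord_val.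
split=> // x y _.
set a := f x; set b := f y.
exists (nth x0 l (a * n + b).*2), (nth x0 l (a * n + b).*2.+1).
by rewrite fE1 // fE2 // dE mE !inord_val; split=> //; apply: el.
Qed.

Definition C n := (n * n).*2.

Lemma av_cover n' (H : Defs.rgraph) : Av (K n'.+1) H ->
  exists S : {set 'I_(rg_n H)}, #|S| <= C n'.+1 /\ indep (@rg_e H) (mem S).
Proof.
move=> HA; case: (posnP (rg_n H)) => [H0|Hp].
  exists set0; split; rewrite ?cards0 // => x.
  by have := leq_trans (ltn_ord x) (eq_leq H0).
have x0 : 'I_(rg_n H) := Ordinal Hp.
case: (cover_or_matching (@rg_e H) x0 (n'.+1 * n'.+1)) => [//|[l [ul sl el]]].
by case: HA; apply: (matching_K ul sl el).
Qed.

Definition typ (H : Defs.rgraph) c (cv : 'I_c -> 'I_(rg_n H)) (v : 'I_(rg_n H)) : {set 'I_c} :=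
  [set i | rg_e (cv i) v].
Definition NC (H : Defs.rgraph) c (cv : 'I_c -> 'I_(rg_n H)) (T : {set 'I_c}) : {set 'I_(rg_n H)} :=
  [set v | (v \notin codom cv) && (typ cv v == T)].

Lemma compare (c : nat) (H H' : Defs.rgraph) (cv : 'I_c -> 'I_(rg_n H))
  (cv' : 'I_c -> 'I_(rg_n H')) (x0 : 'I_(rg_n H)) (x0' : 'I_(rg_n H')) :
  indep (@rg_e H) (mem (codom cv)) -> indep (@rg_e H') (mem (codom cv')) ->
  (forall i j, rg_e (cv i) (cv j) = rg_e (cv' i) (cv' j)) ->
  (forall i j, (cv i == cv j) = (cv' i == cv' j)) ->
  (forall T, #|NC cv T| <= #|NC cv' T|) ->
  (forall T, #|NC cv T| = 0 -> #|NC cv' T| = 0) ->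
  shi_le H H'.
Proof.
move=> hI hI' hR hE hm hs.
pose g (y : 'I_(rg_n H')) :=
  nth x0 (enum (NC cv (typ cv' y)))
    (minn (index y (enum (NC cv' (typ cv' y)))) (#|NC cv (typ cv' y)|.-1)).
pose f (y : 'I_(rg_n H')) :=
  if [pick i | cv' i == y] is Some i then cv i else g y.
have fC i : f (cv' i) = cv i.
  rewrite /f; case: pickP => [i0 /eqP hi0|/(_ i)]; last by rewrite eqxx.
  by apply/eqP; rewrite hE hi0.
have fN y : y \notin codom cv' -> f y = g y.
  move=> yn; rewrite /f; case: pickP => [i0 /eqP hi0|//].
  by case/negP: yn; apply/codomP; exists i0.
have gN y : y \notin codom cv' -> g y \in NC cv (typ cv' y).
  move=> yn.
  have : y \in NC cv' (typ cv' y) by rewrite inE yn eqxx.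
  move=> yin; have : 0 < #|NC cv' (typ cv' y)| by apply/card_gt0P; exists y.
  move=> pos'; have pos : 0 < #|NC cv (typ cv' y)|.
    by case: (posnP #|NC cv (typ cv' y)|) => // /hs; lia.
  rewrite -mem_enum /g; apply: mem_nth; rewrite -cardE.
  by apply: (leq_ltn_trans (geq_minr _ _)); rewrite prednK.
have gN1 y : y \notin codom cv' -> g y \notin codom cv.
  by move/gN; rewrite inE => /andP [].
have gN2 y : y \notin codom cv' -> typ cv (g y) = typ cv' y.
  by move/gN; rewrite inE => /andP [_ /eqP].
have key x y : (x \in codom cv') || (y \in codom cv') -> rg_e (f x) (f y) = rg_e x y.
  have half x1 y1 : x1 \in codom cv' -> rg_e (f x1) (f y1) = rg_e x1 y1.
    case/codomP => i ->; rewrite fC.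
    case: (boolP (y1 \in codom cv')) => [/codomP [j ->]|yn]; first by rewrite fC hR.
    rewrite fN //.
    have := gN2 _ yn => /setP /(_ i); rewrite !inE => ->; done.
  case/orP=> [/half //|yc].
  by rewrite rg_sym [rg_e x y]rg_sym half.
exists f; split; first split.
- move=> x y exy.
  case: (boolP ((x \in codom cv') || (y \in codom cv'))) => [/key -> //|].
  rewrite negb_or => /andP [xn yn].
  case: (eqVneq x y) => [<-|xy]; first exact: rg_refl.
  by move: (hI' x y xn yn xy); rewrite exy.
- move=> x y efxy.
  case: (boolP ((x \in codom cv') || (y \in codom cv'))) => [/key exy|].
    by exists x, y; split=> //; rewrite -exy.
  rewrite negb_or => /andP [xn yn].
  case: (eqVneq (f x) (f y)) => [fxy|fxy].
    by exists x, x; split=> //; apply: rg_refl.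
  by move: (hI _ _ (gN1 _ xn) (gN1 _ yn)); rewrite -fN // -fN // efxy => /(_ fxy).
- move=> w.
  case: (boolP (w \in codom cv)) => [/codomP [i ->]|wn]; first by exists (cv' i).
  set T := typ cv w.
  have win : w \in NC cv T by rewrite inE wn eqxx.
  set k := index w (enum (NC cv T)).
  have kl : k < #|NC cv T| by rewrite cardE index_mem mem_enum.
  have kl' : k < #|NC cv' T| by apply: leq_trans kl (hm T).
  set y := nth x0' (enum (NC cv' T)) k.
  have yin : y \in NC cv' T by rewrite -mem_enum mem_nth // -cardE.
  move: (yin); rewrite inE => /andP [yn /eqP yT].
  exists y; rewrite fN // /g yT index_uniq ?enum_uniq -?cardE //.
  have -> : minn k #|NC cv T|.-1 = k by lia.
  by rewrite nth_index // mem_enum.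
Qed.

Lemma lt_size (A B : Defs.rgraph) : shi_lt A B -> rg_n A < rg_n B.
Proof.
move=> [[f [[hom str] surj]] nle].
have gx a : {x | f x = a} by apply: constructive_indefinite_description.
pose g a := proj1_sig (gx a).
have fg a : f (g a) = a by rewrite /g; case: (gx a).
have ginj : injective g by apply: (can_inj fg).
have := leq_card g ginj; rewrite !card_ord leq_eqVlt => /orP [/eqP eAB|//].
have [h gh hg] := inj_card_bij ginj (eq_leq (etrans (card_ord _) (esym (etrans (card_ord _) eAB)))).
have gf x : g (f x) = x by rewrite -[x]hg fg.
case: nle; exists g; split; last by move=> x; exists (f x).
split.
- move=> a b eab.
  have := str (g a) (g b); rewrite !fg => /(_ eab) [x' [y' [fx fy exy]]].
  by rewrite -fx -fy !gf.
- move=> a b eab; exists a, b; split=> //.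
  by have := hom _ _ eab; rewrite !fg.
Qed.

Lemma no_chain (G : nat -> Defs.rgraph) : ~ (forall i, shi_lt (G i.+1) (G i)).
Proof.
move=> h.
have k i : rg_n (G i) + i <= rg_n (G 0).
  elim: i => [|i IH]; first by rewrite addn0.
  have := lt_size (h i); lia.
have := k (rg_n (G 0)).+1; lia.
Qed.

Definition Pd c (H : Defs.rgraph) (d : option ('I_c -> 'I_(rg_n H))) : Prop :=
  match d with None => rg_n H = 0 | Some cv => indep (@rg_e H) (mem (codom cv)) end.

Definition Xd c := {H : Defs.rgraph & option ('I_c -> 'I_(rg_n H))}.
Definition Id c := ((('I_c * 'I_c) * (bool * bool)) + ({set 'I_c} * bool) + bool)%type.

Definition gfun c (x : Xd c) (t : Id c) : nat :=
  match x with existT H d =>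
  match d with
  | None => match t with inr b => ((rg_n H == 0) == b) | _ => 0 end
  | Some cv => match t with
    | inl (inl ((i, j), (b1, b2))) =>
        ((if b1 then rg_e (cv i) (cv j) else cv i == cv j) == b2)
    | inl (inr (T, b)) => if b then #|NC cv T| else (#|NC cv T| == 0)
    | inr b => ((rg_n H == 0) == b)
    end
  end end.

Lemma bool_eq (b b' : bool) : (b == true) <= (b' == true) -> (b == false) <= (b' == false) -> b = b'.
Proof. by case: b; case: b'. Qed.

Lemma final c (cpos : 0 < c) (H H' : Defs.rgraph) d d' : @Pd c H d -> @Pd c H' d' ->
  (forall t, gfun (existT _ H d) t <= gfun (existT _ H' d') t) -> shi_le H H'.
Proof.
case: d => [cv|]; case: d' => [cv'|] /= hP hP' hg.
- have x0 := cv (Ordinal cpos); have x0' := cv' (Ordinal cpos).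
  apply: (compare x0 x0' hP hP').
  + move=> i j; apply: bool_eq.
      exact: (hg (inl (inl ((i, j), (true, true))))).
    exact: (hg (inl (inl ((i, j), (true, false))))).
  + move=> i j; apply: bool_eq.
      exact: (hg (inl (inl ((i, j), (false, true))))).
    exact: (hg (inl (inl ((i, j), (false, false))))).
  + move=> T; exact: (hg (inl (inr (T, true)))).
  + move=> T h0; have := hg (inl (inr (T, false))); rewrite /= h0 /=.
    by case: eqP.
- have hpos : 0 < rg_n H by apply: leq_ltn_trans (ltn_ord (cv (Ordinal cpos))).
  by have := hg (inr false); rewrite /= hP' eqxx /= eqn0Ngt hpos.
- have hpos : 0 < rg_n H' by apply: leq_ltn_trans (ltn_ord (cv' (Ordinal cpos))).
  by have := hg (inr true); rewrite /= hP eqxx /= eqn0Ngt hpos.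
- have F (y : 'I_(rg_n H')) : False by have := leq_trans (ltn_ord y) (eq_leq hP').
  have F' (y : 'I_(rg_n H)) : False by have := leq_trans (ltn_ord y) (eq_leq hP).
  exists (fun y => False_rect _ (F y)); split; last by move=> a; case: (F' a).
  by split=> x; case: (F x).
Qed.

Theorem theorem3p6 (n : nat) (hn : 1 <= n) : wqo_on (Av (K n)).
Proof.
case: n hn => [//|n'] _.
split; first by case=> G [_ h]; exact: no_chain h.
case=> G [hA hanti].
pose c := C n'.+1.
have cpos : 0 < c by rewrite /c /C double_gt0 muln_gt0.
have ex i : exists d, @Pd c (G i) d.
  have [S [HS HI]] := av_cover (hA i).
  case: (posnP (rg_n (G i))) => [h0|hp]; first by exists None.
  have x0 : 'I_(rg_n (G i)) := Ordinal hp.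
  exists (Some (fun j : 'I_c => nth x0 (enum S) j)) => /=.
  have inS x : x \in S -> x \in codom (fun j : 'I_c => nth x0 (enum S) j).
    move=> xS; apply/codomP.
    have lt : index x (enum S) < c.
      by apply: leq_trans HS; rewrite cardE index_mem mem_enum.
    by exists (Ordinal lt); rewrite /= nth_index // mem_enum.
  move=> x y xn yn xy; apply: HI => //.
  - by apply: contra xn; apply: inS.
  - by apply: contra yn; apply: inS.
pose dd i := proj1_sig (constructive_indefinite_description _ (ex i)).
have hd i : Pd (dd i) := proj2_sig (constructive_indefinite_description _ (ex i)).
have [i [j [ij hij]]] := dickson (@gfun c) (fun i => existT _ (G i) (dd i)).
apply: (hanti i j); first by move=> e; rewrite e ltnn in ij.
exact: (final cpos (hd i) (hd j) hij).
Qed.
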